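(* Let $\alpha\in\mathbb{S}_r$, $\beta\in\mathbb{S}_s$ with $\alpha\succ0$, $\beta\succ0$, and let $\sigma\in\mathbb{A}_r$, $\tau\in\mathbb{A}_s$. Consider the self-adjoint linear operator $\Phi:\mathbb{R}^{r\times s}\to\mathbb{R}^{r\times s}$, $\Phi(X):=\alpha X\beta+\sigma X\tau$, on the Hilbert space $\mathbb{R}^{r\times s}$ with the Frobenius inner product $\langle X,Y\rangle=\mathrm{Tr}(X^{T}Y)$. Then $\Phi$ is positive semi-definite if and only if $$\rho(\alpha^{-1}\sigma)\,\rho(\tau\beta^{-1})\le 1,$$ where $\rho(\cdot)$ denotes the spectral radius.
   Context: $\mathbb{S}_k$ and $\mathbb{A}_k$ denote the spaces of real symmetric and real antisymmetric $k\times k$ matrices, respectively. *)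

(* Defs.v *)
(* Real matrices are modelled as matrices with entries in the
   real subset (Num.real) of an arbitrary numeric closed field C (e.g. the
   complex numbers); eigenvalues then live in C. *)
From HB Require Import structures.
From mathcomp Require Import all_boot all_order all_algebra.
Set Implicit Arguments. Unset Strict Implicit. Unset Printing Implicit Defensive.
Import Order.TTheory GRing.Theory Num.Theory.
Local Open Scope ring_scope.

Section Defs.
Variable C : numClosedFieldType.

Definition real_mx m n (A : 'M[C]_(m, n)) : Prop := A \is a mxOver Num.real.

Definition sym_mx k (A : 'M[C]_k) : Prop := real_mx A /\ A^T = A.

Definition antisym_mx k (A : 'M[C]_k) : Prop := real_mx A /\ A^T = - A.

Definition posdef_mx k (A : 'M[C]_k) : Prop :=
  forall v : 'rV[C]_k, real_mx v -> v != 0 -> 0 < (v *m A *m v^T) 0 0.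

Definition frob m n (X Y : 'M[C]_(m, n)) : C := \tr (X^T *m Y).

Definition psd_op m n (Phi : 'M[C]_(m, n) -> 'M[C]_(m, n)) : Prop :=
  forall X : 'M[C]_(m, n), real_mx X -> 0 <= frob X (Phi X).

Definition eigenvalues k (A : 'M[C]_k) : seq C :=
  sval (closed_field_poly_normal (char_poly A)).

(* spectral radius: max modulus of an eigenvalue (0 if k = 0) *)
Definition spectral_radius k (A : 'M[C]_k) : C :=
  \big[Num.max/0]_(z <- eigenvalues A) `|z|.

End Defs.

(* Main.v *)
Require Import Defs.
From HB Require Import structures.
From mathcomp Require Import all_boot all_order all_algebra ring.
Import Order.TTheory GRing.Theory Num.Theory.
Local Open Scope ring_scope.
Local Open Scope sesquilinear_scope.

Section Aux.
Variable C : numClosedFieldType.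

Lemma adj_real_i m n (X Y : 'M[C]_(m,n)) : real_mx X -> real_mx Y ->
  (X + 'i *: Y)^t* = X^T - 'i *: Y^T.
Proof.
move=> rX rY; apply/matrixP => i j; rewrite !mxE rmorphD rmorphM /= conjCi.
by rewrite (CrealP (mxOverP rX _ _)) (CrealP (mxOverP rY _ _)) mulNr.
Qed.

Lemma complexify m n (Phi : 'M[C]_(m,n) -> 'M_(m,n))
 (PhiD : forall X Y, Phi (X + Y) = Phi X + Phi Y)
 (PhiZ : forall c X, Phi (c *: X) = c *: Phi X)
 (PhiS : forall X Y, \tr (X^T *m Phi Y) = \tr (Y^T *m Phi X))
 X Y : real_mx X -> real_mx Y ->
 \tr ((X + 'i *: Y)^t* *m Phi (X + 'i *: Y)) = \tr (X^T *m Phi X) + \tr (Y^T *m Phi Y).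
Proof.
move=> rX rY; rewrite adj_real_i // PhiD PhiZ mulmxDl !mulmxDr !mulNmx -!scalemxAl -!scalemxAr.
rewrite !mxtraceD !raddfN /= !mxtraceZ (PhiS Y X).
rewrite mulrA -expr2 sqrCi mulN1r opprK addrA addrK; done.
Qed.

Lemma decomp_real m n (Z : 'M[C]_(m,n)) :
  exists X Y, [/\ real_mx X, real_mx Y & Z = X + 'i *: Y].
Proof.
exists (map_mx (@Re C) Z), (map_mx (@Im C) Z); split.
- by apply/mxOverP => i j; rewrite mxE Creal_Re.
- by apply/mxOverP => i j; rewrite mxE Creal_Im.
by apply/matrixP => i j; rewrite !mxE -Crect.
Qed.

Lemma tr_swap m n (X Y : 'M[C]_(m,n)) (A : 'M_m) (B : 'M_n) :
  \tr (X^T *m (A *m Y *m B)) = \tr (Y^T *m (A^T *m X *m B^T)).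
Proof.
rewrite -mxtrace_tr !trmx_mul !trmxK -!mulmxA mxtrace_mulC -!mulmxA; done.
Qed.

Lemma posdefC k (M : 'M[C]_k) : sym_mx M -> posdef_mx M ->
  forall v : 'rV_k, v != 0 -> 0 < (v *m M *m v^t* ) 0 0.
Proof.
move=> [rM sM] pM v v0.
have Q0 : forall X : 'cV[C]_k, real_mx X -> 0 <= \tr (X^T *m (M *m X)).
  move=> X rX; rewrite trace_mx11 mulmxA.
  have [->|nz] := eqVneq X 0; first by rewrite mulmx0 mxE.
  apply: ltW; rewrite -[X in _ *m X]trmxK; apply: pM.
    by apply/mxOverP => i j; rewrite mxE (mxOverP rX).
  by rewrite trmx_eq0.
have [X [Y [rX rY ZE]]] := decomp_real _ _ (v^T).
have := @complexify k 1 (fun X => M *m X) (fun X Y => mulmxDr _ _ _)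
  (fun c X => esym (scalemxAr _ _ _)) _ X Y rX rY.
rewrite -ZE.
have -> : \tr ((v^T)^t* *m (M *m v^T)) = (v *m M *m v^t* ) 0 0.
  rewrite trmxK trace_mx11.
  rewrite [LHS](_ : _ = (((map_mx Num.Def.conjC v) *m (M *m v^T))^T) 0 0); last by rewrite [RHS]mxE.
  by rewrite !trmx_mul trmxK sM map_trmx.
move=> ->; last first.
  move=> A B; have := tr_swap _ _ A B M 1%:M; rewrite !mulmx1 trmx1 sM !mulmx1; done.
have [X0|nX] := eqVneq X 0.
  rewrite X0 !mulmx0 mxtrace0 add0r.
  rewrite trace_mx11 mulmxA -[Y in _ *m Y]trmxK; apply: pM.
    by apply/mxOverP => i j; rewrite mxE (mxOverP rY).
  rewrite trmx_eq0; apply: contraNneq v0 => Y0.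
  by rewrite -[v]trmxK ZE Y0 X0 scaler0 addr0 trmx0.
apply: (@lt_le_trans _ _ (\tr (X^T *m (M *m X)))); last by rewrite lerDl; exact: Q0.
rewrite trace_mx11 mulmxA -[X in _ *m X]trmxK; apply: pM.
  by apply/mxOverP => i j; rewrite mxE (mxOverP rX).
by rewrite trmx_eq0.
Qed.
Lemma bigmax_norm (s : seq C) :
  let m := \big[Num.max/0]_(z <- s) `|z| in
  [/\ 0 <= m, (forall z, z \in s -> `|z| <= m) &
      (m = 0 \/ exists2 z, z \in s & `|z| = m)].
Proof.
elim: s => [|x s [IH1 IH2 IH3]] /=.
  by rewrite big_nil; split => //; left.
rewrite big_cons.
set m := \big[Num.max/0]_(z <- s) `|z| in IH1 IH2 IH3 *.
have rx : `|x| \is Num.real by rewrite realE normr_ge0.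
have rm : m \is Num.real by rewrite realE IH1.
have [hlt|hge] := boolP (`|x| < m).
  rewrite /Num.max /Order.max hlt.
  split => //.
  - by move=> z; rewrite inE => /orP[/eqP->|/IH2//]; exact: ltW.
  - by case: IH3 => [->|[z zs <-]]; [left|right; exists z => //; rewrite inE zs orbT].
rewrite /Num.max /Order.max (negbTE hge).
have le : m <= `|x| by rewrite real_leNgt.
split => //.
- move=> z; rewrite inE => /orP[/eqP->//|/IH2 h]; exact: le_trans h le.
- by right; exists x => //; rewrite inE eqxx.
Qed.

Lemma eigenvaluesE k (A : 'M[C]_k) z : (z \in eigenvalues A) = root (char_poly A) z.
Proof.
rewrite /eigenvalues; case: closed_field_poly_normal => s /= Hs.
by rewrite [in RHS]Hs rootZ ?root_prod_XsubC // lead_coef_eq0 monic_neq0 // char_poly_monic.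
Qed.

Lemma sr_ge0 k (A : 'M[C]_k) : 0 <= spectral_radius A.
Proof. by case: (bigmax_norm (eigenvalues A)). Qed.

Lemma sr_root k (A : 'M[C]_k) z : root (char_poly A) z -> `|z| <= spectral_radius A.
Proof. by rewrite -eigenvaluesE; case: (bigmax_norm (eigenvalues A)) => _ H _ /H. Qed.

Lemma sr_attained k (A : 'M[C]_k) :
  spectral_radius A = 0 \/ exists2 z, root (char_poly A) z & `|z| = spectral_radius A.
Proof.
case: (bigmax_norm (eigenvalues A)) => _ _ [H|[z zs H]]; first by left.
by right; exists z; rewrite -?eigenvaluesE.
Qed.

Lemma char_poly_sim k (A M N : 'M[C]_k) : M *m N = 1%:M ->
  char_poly (M *m A *m N) = char_poly A.
Proof.
move=> MN; rewrite /char_poly /char_poly_mx.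
have -> : 'X%:M - map_mx polyC (M *m A *m N) =
   map_mx polyC M *m ('X%:M - map_mx polyC A) *m map_mx polyC N.
  rewrite mulmxBr mulmxBl !map_mxM; congr (_ - _).
  by rewrite -scalemx1 -scalemxAr mulmx1 -scalemxAl -map_mxM MN map_mx1 scalemx1.
rewrite !det_mulmx mulrC mulrA -det_mulmx -map_mxM.
by rewrite (mulmx1C MN) map_mx1 det1 mul1r.
Qed.

Lemma unitary_tr k (P : 'M[C]_k) : P \is unitarymx -> P^t* *m P = 1%:M.
Proof. by move=> /unitarymxP H; apply: mulmx1C. Qed.

Lemma sqrt_fact k (M : 'M[C]_k) : sym_mx M -> posdef_mx M ->
  exists a ainv : 'M_k, [/\ M = a^t* *m a, a *m ainv = 1%:M & ainv *m a = 1%:M].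
Proof.
move=> [rM sM] pM.
have Mh : M \is hermsymmx.
  apply: realsym_hermsym => //; apply/is_hermitianmxP.
  by rewrite expr0 scale1r map_mx_id // sM.
have /orthomx_spectralP ME := hermitian_normalmx Mh.
have dR := hermitian_spectral_diag_real Mh.
set P := spectralmx M in ME; set d := spectral_diag M in ME dR.
have Pu : P \is unitarymx := spectral_unitarymx M.
have PP : P *m P^t* = 1%:M by apply/unitarymxP.
have PtP : P^t* *m P = 1%:M by apply: unitary_tr.
rewrite invmx_unitary // in ME.
have Dd : P *m M *m P^t* = diag_mx d.
  by rewrite ME !mulmxA PP mul1mx -mulmxA PP mulmx1.
have dpos : forall j, 0 < d 0 j.
  move=> j; have -> : d 0 j = (row j P *m M *m (row j P)^t* ) 0 0.
    transitivity ((P *m M *m P^t*) j j); first by rewrite Dd mxE eqxx mulr1n.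
    rewrite !mxE; apply: eq_bigr => l _; rewrite !mxE; congr (_ * _).
    by apply: eq_bigr => l' _; rewrite !mxE.
  apply: posdefC => //; apply/negP => /eqP r0.
  have : (P *m P^t* ) j j = 0.
    by rewrite mxE; apply: big1 => l _; have := congr1 (fun A : 'rV[C]_k => A 0 l) r0; rewrite !mxE => ->; rewrite mul0r.
  by rewrite PP mxE eqxx /= => /eqP; rewrite oner_eq0.
pose s := \row_j sqrtC (d 0 j).
pose si := \row_j (sqrtC (d 0 j))^-1.
have sR : forall j, (sqrtC (d 0 j))^* = sqrtC (d 0 j).
  by move=> j; apply: conj_Creal; apply: sqrtC_real; apply: ltW.
have sn0 : forall j, sqrtC (d 0 j) != 0.
  by move=> j; rewrite sqrtC_eq0; apply: lt0r_neq0.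
exists (diag_mx s *m P), (P^t* *m diag_mx si); split.
- rewrite ME !trmx_mul map_mxM tr_diag_mx map_diag_mx mulmxA.
  rewrite -(mulmxA _ (diag_mx _) (diag_mx s)) mulmx_diag -mulmxA.
  rewrite -[RHS]mulmxA; congr (_ *m (diag_mx _ *m _)); apply/rowP => j; rewrite !mxE.
  rewrite -[X in X * _]/((sqrtC (d 0 j))^*) sR.
  by rewrite -expr2 sqrtCK.
- rewrite mulmxA -[diag_mx s *m P *m _]mulmxA PP mulmx1 mulmx_diag -diag_const_mx.
  by congr diag_mx; apply/rowP => j; rewrite !mxE mulfV.
- rewrite mulmxA -[_ *m diag_mx si *m _]mulmxA mulmx_diag.
  have -> : diag_mx (\row_j (si 0 j * s 0 j)) = 1%:M.
    by rewrite -diag_const_mx; congr diag_mx; apply/rowP => j; rewrite !mxE mulVf.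
  by rewrite mulmx1 PtP.
Qed.

Lemma skew_diag k (S : 'M[C]_k) : S^t* = - S ->
  exists U D, [/\ U \is unitarymx, S = U^t* *m diag_mx D *m U,
    (forall i, (D 0 i)^* = - D 0 i) &
    char_poly S = \prod_(i < k) ('X - (D 0 i)%:P)].
Proof.
move=> Sk.
have Sn : S \is normalmx by apply/normalmxP; rewrite Sk mulmxN mulNmx.
have /orthomx_spectralP SE := Sn.
set U := spectralmx S in SE; set D := spectral_diag S in SE.
have Uu : U \is unitarymx := spectral_unitarymx S.
have UU : U *m U^t* = 1%:M by apply/unitarymxP.
have UtU : U^t* *m U = 1%:M by apply: unitary_tr.
rewrite invmx_unitary // in SE.
exists U, D; split => //.
- move=> i.
  have Dd : U *m S *m U^t* = diag_mx D.
    by rewrite SE !mulmxA UU mul1mx -mulmxA UU mulmx1.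
  have : (U *m S *m U^t*)^t* = - (U *m S *m U^t*).
    by rewrite !trmx_mul !map_mxM trmxCK Sk mulNmx mulmxN mulmxA.
  rewrite Dd tr_diag_mx map_diag_mx => /matrixP /(_ i i).
  by rewrite !mxE eqxx !mulr1n.
- rewrite SE char_poly_sim // char_poly_trig ?diag_mx_is_trig //.
  by apply: eq_bigr => i _; rewrite mxE eqxx mulr1n.
Qed.

Lemma adjM m n p (A : 'M[C]_(m,n)) (B : 'M_(n,p)) : (A *m B)^t* = B^t* *m A^t*.
Proof. by rewrite trmx_mul map_mxM. Qed.

Lemma adjK m n (A : 'M[C]_(m,n)) : A^t*^t* = A.
Proof. exact: trmxCK. Qed.

Lemma tr_diag_form m n (W : 'M[C]_(m,n)) D E :
  \tr (W^t* *m (W + diag_mx D *m W *m diag_mx E)) =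
  \sum_j \sum_i (W i j)^* * W i j * (1 + D 0 i * E 0 j).
Proof.
rewrite mul_mx_diag mul_diag_mx /mxtrace; apply: eq_bigr => j _; rewrite !mxE; apply: eq_bigr => i _.
rewrite !mxE; ring.
Qed.

Lemma key_identity m n (a S U : 'M[C]_m) (c T V : 'M[C]_n) (D : 'rV[C]_m) (E : 'rV[C]_n) (X : 'M_(m,n)) :
  U^t* *m U = 1%:M -> V *m V^t* = 1%:M ->
  S = U^t* *m diag_mx D *m U -> T = V^t* *m diag_mx E *m V ->
  \tr (X^t* *m (a^t* *m a *m X *m (c^t* *m c) + a^t* *m S *m a *m X *m (c^t* *m T *m c))) =
  let W := U *m a *m X *m c^t* *m V^t* in
  \sum_j \sum_i (W i j)^* * W i j * (1 + D 0 i * E 0 j).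
Proof.
move=> UtU VVt -> ->; set W := U *m a *m X *m c^t* *m V^t*; rewrite /= -tr_diag_form.
rewrite !mulmxDr !mxtraceD; congr (_ + _).
  rewrite /W !adjM (adjK _ _ c) (adjK _ _ V).
  rewrite !mulmxA mxtrace_mulC !mulmxA.
  rewrite -![in RHS]mulmxA [in RHS]mxtrace_mulC !mulmxA.
  by rewrite -(mulmxA _ (U^t*) U) UtU mulmx1 -(mulmxA _ (V^t*) V) (mulmx1C VVt) mulmx1.
rewrite /W !adjM (adjK _ _ c) (adjK _ _ V).
rewrite !mulmxA mxtrace_mulC !mulmxA.
by rewrite -![in RHS]mulmxA [in RHS]mxtrace_mulC !mulmxA.
Qed.

Lemma root_prodX k (D : 'rV[C]_k) z :
  root (\prod_(i<k) ('X - (D 0 i)%:P)) z -> exists i, z = D 0 i.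
Proof.
rewrite /root horner_prod => /prodf_eq0 [i _]; rewrite hornerXsubC subr_eq0 => /eqP ->.
by exists i.
Qed.

Lemma root_prodX' k (D : 'rV[C]_k) i : root (\prod_(i<k) ('X - (D 0 i)%:P)) (D 0 i).
Proof.
by rewrite /root horner_prod; apply/prodf_eq0; exists i => //; rewrite hornerXsubC subrr.
Qed.

Lemma realmx_conj m n (A : 'M[C]_(m,n)) : map_mx Num.Def.conjC A = A -> real_mx A.
Proof.
move=> h; apply/mxOverP => i j; apply/CrealP.
by have := congr1 (fun B : 'M[C]_(m,n) => B i j) h; rewrite mxE.
Qed.

Lemma cp_conj k (A : 'M[C]_k) z : real_mx A -> root (char_poly A) z -> root (char_poly A) z^*.
Proof.
move=> rA; rewrite /root => /eqP h.
have : (map_poly Num.Def.conjC (char_poly A)).[z^*] = 0 by rewrite horner_map h rmorph0.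
by rewrite map_char_poly realmxC // => ->.
Qed.

Lemma real_invM k (M N : 'M[C]_k) : real_mx M -> real_mx N -> real_mx (invmx M *m N).
Proof.
move=> rM rN; apply: realmx_conj.
by rewrite map_mxM map_invmx !realmxC.
Qed.

Lemma real_MinvM k (M N : 'M[C]_k) : real_mx M -> real_mx N -> real_mx (N *m invmx M).
Proof.
move=> rM rN; apply: realmx_conj.
by rewrite map_mxM map_invmx !realmxC.
Qed.

Lemma main_aux r s (alpha sigma : 'M[C]_r) (beta tau : 'M[C]_s)
    (Halpha : sym_mx alpha) (Hbeta : sym_mx beta)
    (Halpha_pd : posdef_mx alpha) (Hbeta_pd : posdef_mx beta)
    (Hsigma : antisym_mx sigma) (Htau : antisym_mx tau) :
  psd_op (fun X : 'M[C]_(r, s) => alpha *m X *m beta + sigma *m X *m tau)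
  <-> spectral_radius (invmx alpha *m sigma) * spectral_radius (tau *m invmx beta) <= 1.
Proof.
have [a [ainv [aE aai aia]]] := sqrt_fact _ _ Halpha Halpha_pd.
have [c [cinv [bE cci cic]]] := sqrt_fact _ _ Hbeta Hbeta_pd.
have rsig := Hsigma.1; have tsig := Hsigma.2.
have rtau := Htau.1; have ttau := Htau.2.
have adj1 : forall k, (1%:M : 'M[C]_k)^t* = 1%:M by move=> k; rewrite trmx1 map_mx1.
have sadj : sigma^t* = - sigma by rewrite -map_trmx realmxC // tsig.
have tadj : tau^t* = - tau by rewrite -map_trmx realmxC // ttau.
pose S := ainv^t* *m sigma *m ainv.
pose T := cinv^t* *m tau *m cinv.
have sigE : sigma = a^t* *m S *m a.
  by rewrite /S !mulmxA -adjM aia adj1 mul1mx -mulmxA aia mulmx1.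
have tauE : tau = c^t* *m T *m c.
  by rewrite /T !mulmxA -adjM cic adj1 mul1mx -mulmxA cic mulmx1.
have Sk : S^t* = - S.
  by rewrite /S !adjM (adjK _ _ ainv) sadj mulNmx mulmxN mulmxA.
have Tk : T^t* = - T.
  by rewrite /T !adjM (adjK _ _ cinv) tadj mulNmx mulmxN mulmxA.
have [U [D [Uu SE Dc cpS]]] := skew_diag _ _ Sk.
have [V [E [Vu TE Ec cpT]]] := skew_diag _ _ Tk.
have UtU := unitary_tr _ _ Uu.
have VV : V *m V^t* = 1%:M by apply/unitarymxP.
have UU : U *m U^t* = 1%:M by apply/unitarymxP.
have QcE : forall X : 'M[C]_(r,s),
    \tr (X^t* *m (alpha *m X *m beta + sigma *m X *m tau)) =
    let W := U *m a *m X *m c^t* *m V^t* in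
    \sum_j \sum_i (W i j)^* * W i j * (1 + D 0 i * E 0 j).
  move=> X; rewrite {1}aE {1}bE {1}sigE {1}tauE; exact: key_identity.
have invA : invmx alpha = ainv *m ainv^t*.
  have h : alpha *m (ainv *m ainv^t*) = 1%:M.
    by rewrite aE -mulmxA (mulmxA a) aai mul1mx -adjM aia adj1.
  have [au _] := mulmx1_unit h.
  by rewrite -[invmx alpha]mulmx1 -h (mulmxA (invmx alpha)) mulVmx // mul1mx.
have invB : invmx beta = cinv *m cinv^t*.
  have h : beta *m (cinv *m cinv^t*) = 1%:M.
    by rewrite bE -mulmxA (mulmxA c) cci mul1mx -adjM cic adj1.
  have [bu _] := mulmx1_unit h.
  by rewrite -[invmx beta]mulmx1 -h (mulmxA (invmx beta)) mulVmx // mul1mx.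
have cp1 : char_poly (invmx alpha *m sigma) = char_poly S.
  rewrite invA {1}sigE !mulmxA -(mulmxA ainv (ainv^t*) (a^t*)) -adjM aai adj1 mulmx1.
  have -> : ainv *m ainv^t* *m sigma *m ainv *m a = ainv *m S *m a by rewrite /S !mulmxA.
  exact: char_poly_sim.
have cp2 : char_poly (tau *m invmx beta) = char_poly T.
  rewrite invB {1}tauE !mulmxA -(mulmxA _ c cinv) cci mulmx1.
  have -> : c^t* *m cinv^t* *m tau *m cinv *m cinv^t* = c^t* *m T *m cinv^t* by rewrite /T !mulmxA.
  by apply: char_poly_sim; rewrite -adjM cic adj1.
have rhoS : spectral_radius (invmx alpha *m sigma) = spectral_radius S.
  by rewrite /spectral_radius /eigenvalues cp1.
have rhoT : spectral_radius (tau *m invmx beta) = spectral_radius T.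
  by rewrite /spectral_radius /eigenvalues cp2.
rewrite rhoS rhoT.
have pReal : forall i j, (D 0 i * E 0 j) \is Num.real.
  move=> i j; apply/CrealP; rewrite rmorphM.
  by rewrite -[X in X * _ = _]/((D 0 i)^*) -[X in _ * X = _]/((E 0 j)^*) Dc Ec mulrNN.
split.
- move=> Hpsd.
  have Qc0 : forall X : 'M[C]_(r,s),
      0 <= \tr (X^t* *m (alpha *m X *m beta + sigma *m X *m tau)).
    pose Phi := fun X : 'M[C]_(r,s) => alpha *m X *m beta + sigma *m X *m tau.
    have PD : forall Y Z, Phi (Y + Z) = Phi Y + Phi Z.
      by move=> Y Z; rewrite /Phi !mulmxDr !mulmxDl addrACA.
    have PZ : forall k Y, Phi (k *: Y) = k *: Phi Y.
      by move=> k Y; rewrite /Phi -!scalemxAr -!scalemxAl scalerDr.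
    have PS : forall Y Z, \tr (Y^T *m Phi Z) = \tr (Z^T *m Phi Y).
      move=> Y Z; rewrite /Phi !mulmxDr !mxtraceD (tr_swap _ _ Y Z alpha beta) (tr_swap _ _ Y Z sigma tau) Halpha.2 Hbeta.2 tsig ttau.
      by rewrite ?mulNmx ?mulmxN ?mulNmx ?opprK.
    move=> X; have [X1 [X2 [r1 r2 XE]]] := decomp_real _ _ X.
    have E0 := complexify _ _ Phi PD PZ PS X1 X2 r1 r2.
    change (0 <= \tr (X^t* *m Phi X)); rewrite XE E0.
    by apply: addr_ge0; [exact: (Hpsd X1 r1)|exact: (Hpsd X2 r2)].
  case: (@sr_attained _ S) => [->|[z zr zn]]; first by rewrite mul0r ler01.
  case: (@sr_attained _ T) => [->|[w wr wn]]; first by rewrite mulr0 ler01.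
  rewrite cpS in zr; have [i zi] := root_prodX _ _ _ zr.
  rewrite cpT in wr; have [j wj] := root_prodX _ _ _ wr.
  have pn : `|D 0 i * E 0 j| = spectral_radius S * spectral_radius T.
    by rewrite normrM -zi -wj zn wn.
  have [i0 Hi0] : exists i0, D 0 i0 * E 0 j = - `|D 0 i * E 0 j|.
    case: (real_ge0P (pReal i j)) => hp.
      have : root (char_poly S) (D 0 i)^*.
        rewrite -cp1; apply: cp_conj; first exact: real_invM Halpha.1 rsig.
        by rewrite cp1 cpS; apply: root_prodX'.
      by rewrite cpS => /root_prodX [i0 h]; exists i0; rewrite -h Dc mulNr.
    by exists i; rewrite opprK.
  pose X := ainv *m U^t* *m delta_mx i0 j *m V *m cinv^t*.
  have := Qc0 X; rewrite QcE /=.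
  have -> : U *m a *m X *m c^t* *m V^t* = delta_mx i0 j.
    rewrite /X !mulmxA -(mulmxA U a ainv) aai mulmx1 UU mul1mx.
    rewrite -(mulmxA _ (cinv^t*) (c^t*)) -adjM cci adj1 mulmx1.
    by rewrite -mulmxA VV mulmx1.
  rewrite (bigD1 j) //= [X in _ + X]big1 ?addr0; last first.
    move=> j' nj; apply: big1 => i' _; rewrite !mxE (negbTE nj) andbF /= mulr0 mul0r.
  try by [].
  rewrite (bigD1 i0) //= [X in _ + X]big1 ?addr0; last first.
    move=> i' ni; rewrite !mxE (negbTE ni) /= mulr0 mul0r; done.
  by rewrite !mxE !eqxx /= rmorph1 !mul1r Hi0 pn subr_ge0.
- move=> Hrho X rX.
  rewrite /frob.
  have XT : X^T = X^t* by rewrite -map_trmx realmxC.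
  rewrite XT QcE /=.
  apply: sumr_ge0 => j _; apply: sumr_ge0 => i _; apply: mulr_ge0.
    by rewrite -normCKC exprn_ge0 // normr_ge0.
  have hle : `|D 0 i * E 0 j| <= 1.
    apply: le_trans Hrho; rewrite normrM; apply: ler_pM; rewrite ?normr_ge0 //.
      by apply: sr_root; rewrite cpS; apply: root_prodX'.
    by apply: sr_root; rewrite cpT; apply: root_prodX'.
  move: hle; rewrite real_ler_norml ?pReal // => /andP[h _].
  by rewrite addrC -[1]opprK subr_ge0.
Qed.
End Aux.

Local Close Scope sesquilinear_scope.

Theorem lemma6 (C : numClosedFieldType) (r s : nat)
    (alpha sigma : 'M[C]_r) (beta tau : 'M[C]_s)
    (Halpha : sym_mx alpha) (Hbeta : sym_mx beta)
    (Halpha_pd : posdef_mx alpha) (Hbeta_pd : posdef_mx beta)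
    (Hsigma : antisym_mx sigma) (Htau : antisym_mx tau) :
  psd_op (fun X : 'M[C]_(r, s) => alpha *m X *m beta + sigma *m X *m tau)
  <-> spectral_radius (invmx alpha *m sigma) * spectral_radius (tau *m invmx beta) <= 1.
Proof. exact: (@main_aux C r s alpha sigma beta tau Halpha Hbeta Halpha_pd Hbeta_pd Hsigma Htau). Qed.
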